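(* Let $S$ be a poset and let $S\otimes_i G_i$ and $S\otimes_i H_i$ be terminating ordered joins in the same shape $S$. If $G_i\simeq_1 H_i$ for every $i\in S$, then $S\otimes_i G_i\simeq_1 S\otimes_i H_i$.
   Context: All games are impartial combinatorial games under normal play; a game is determined by its set of options, and $G \to G'$ means $G'$ is an option of $G$. A game is terminating if it admits no infinite sequence of moves. $\mathbf{0}$ denotes the game with no options. The Grundy number of a terminating game $G$ is the ordinal $\Gamma_0(G)=\operatorname{mex}\{\Gamma_0(G') : G\to G'\}$, where $\operatorname{mex}\Lambda$ is the least ordinal not in the set of ordinals $\Lambda$. The Grundy set of a terminating game $G$ is $\Gamma_1(G)=\{\Gamma_0(G') : G\to G'\}$. Games $G,H$ are $1$-equivalent, $G\simeq_1 H$, if $\Gamma_1(G)=\Gamma_1(H)$. Ordered join: for a poset $S$ and a family $(G_i)_{i\in S}$ of games, $S \otimes_i G_i$ is the game whose options are exactly the ordered joins $S \otimes_i G'_i$ obtained by choosing one $i_0\in S$ and an option $G_{i_0}\to G'_{i_0}$, and setting $G'_i=\mathbf{0}$ for all $i>i_0$ and $G'_i=G_i$ for all other $i\ne i_0$. *)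

(* Defs.v *)
(** * Sets (for ordinals): Aczel's model of well-founded sets. *)
Inductive zset : Type := zsup : forall A : Type, (A -> zset) -> zset.

Fixpoint zeq (x y : zset) {struct x} : Prop :=
  match x, y with
  | zsup A f, zsup B g =>
      (forall a, exists b, zeq (f a) (g b)) /\ (forall b, exists a, zeq (f a) (g b))
  end.

Definition zin (x y : zset) : Prop :=
  match y with zsup B g => exists b, zeq x (g b) end.
Definition zsub (x y : zset) : Prop := forall z, zin z x -> zin z y.

(** von Neumann ordinals: transitive sets of transitive sets (the universe of
    zsets is well-founded, so this is the usual notion of ordinal). *)
Definition ztransitive (x : zset) : Prop := forall z, zin z x -> zsub z x.
Definition zordinal (x : zset) : Prop :=
  ztransitive x /\ forall z, zin z x -> ztransitive z.

Definition is_mex (L : zset -> Prop) (a : zset) : Prop :=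
  zordinal a /\ ~ L a /\ (forall b, zordinal b -> ~ L b -> zsub a b).

(** * Games.  A terminating impartial game is a well-founded tree: a game
    is given by its family of options. *)
Inductive game : Type := Game : forall A : Type, (A -> game) -> game.

Definition is_option (g x : game) : Prop :=
  match g with Game A f => exists a, f a = x end.

Definition zero : game := Game Empty_set (fun e => match e with end).

Fixpoint grundy (g : game) (a : zset) : Prop :=
  match g with
  | Game A f => is_mex (fun b => exists i, grundy (f i) b) a
  end.

Definition grundy_set (g : game) (a : zset) : Prop :=
  exists x, is_option g x /\ grundy x a.

Definition equiv1 (g h : game) : Prop :=
  forall a, grundy_set g a <-> grundy_set h a.

Definition is_poset (S : Type) (le : S -> S -> Prop) : Prop :=
  (forall i, le i i) /\
  (forall i j, le i j -> le j i -> i = j) /\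
  (forall i j k, le i j -> le j k -> le i k).

Definition slt {S : Type} (le : S -> S -> Prop) (i j : S) : Prop :=
  le i j /\ i <> j.

Definition moved {S : Type} (le : S -> S -> Prop) (F : S -> game) (i0 : S)
    (g' : game) (F' : S -> game) : Prop :=
  F' i0 = g' /\
  (forall i, slt le i0 i -> F' i = zero) /\
  (forall i, i <> i0 -> ~ slt le i0 i -> F' i = F i).

(** Since [game] consists of
    well-founded trees, such a J exists iff the ordered join is terminating. *)
Inductive ordered_join {S : Type} (le : S -> S -> Prop) :
    (S -> game) -> game -> Prop :=
| oj_intro : forall (F : S -> game) (J : game),
    (forall X, is_option J X ->
       exists i0 g' F', is_option (F i0) g' /\ moved le F i0 g' F' /\
                        ordered_join le F' X) ->
    (forall i0 g' F', is_option (F i0) g' -> moved le F i0 g' F' ->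
       exists X, is_option J X /\ ordered_join le F' X) ->
    ordered_join le F J.

(* Main.v *)
Require Import Defs.
From Stdlib Require Import Classical ClassicalEpsilon.

Lemma zeq_refl x : zeq x x.
Proof. induction x as [A f IH]; simpl; split; intro a; exists a; auto. Qed.

Lemma zeq_sym : forall x y, zeq x y -> zeq y x.
Proof.
  induction x as [A f IH]; destruct y as [B g]; simpl; intros [h1 h2]; split.
  - intro b; destruct (h2 b) as [a Ha]; exists a; apply IH; auto.
  - intro a; destruct (h1 a) as [b Hb]; exists b; apply IH; auto.
Qed.

Lemma zeq_trans : forall x y z, zeq x y -> zeq y z -> zeq x z.
Proof.
  induction x as [A f IH]; destruct y as [B g]; destruct z as [C h]; simpl;
    intros [h1 h2] [k1 k2]; split.
  - intro a; destruct (h1 a) as [b Hb]; destruct (k1 b) as [c Hc]; exists c; eauto.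
  - intro c; destruct (k2 c) as [b Hb]; destruct (h2 b) as [a Ha]; exists a; eauto.
Qed.

Lemma zin_eql x x' y : zeq x x' -> zin x y -> zin x' y.
Proof.
  destruct y as [B g]; simpl; intros E [b Hb]; exists b.
  eapply zeq_trans; [apply zeq_sym; exact E| exact Hb].
Qed.

Lemma zin_eqr x y y' : zeq y y' -> zin x y -> zin x y'.
Proof.
  destruct y as [B g]; destruct y' as [C h]; simpl; intros [h1 _] [b Hb].
  destruct (h1 b) as [c Hc]; exists c; eapply zeq_trans; eauto.
Qed.

Lemma zext x y : zsub x y -> zsub y x -> zeq x y.
Proof.
  destruct x as [A f]; destruct y as [B g]; unfold zsub; simpl; intros H1 H2; split.
  - intro a; apply H1; exists a; apply zeq_refl.
  - intro b; destruct (H2 (g b)) as [a Ha]; [exists b; apply zeq_refl|].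
    exists a; apply zeq_sym; auto.
Qed.

Lemma zeq_sub x y : zeq x y -> zsub x y.
Proof. intros E z Hz; eapply zin_eqr; eauto. Qed.

Lemma zin_ind (P : zset -> Prop) :
  (forall x, (forall y, zin y x -> P y) -> P x) -> forall x, P x.
Proof.
  intros H.
  assert (K : forall x y, zeq y x -> P y).
  { induction x as [A f IH]; intros y E; apply H; intros z Hz.
    pose proof (zin_eqr _ _ _ E Hz) as [a Ha]. eapply IH; eauto. }
  intro x; apply (K x); apply zeq_refl.
Qed.

Lemma zin_irrefl x : ~ zin x x.
Proof.
  induction x using zin_ind. intro Hx. apply (H x Hx Hx).
Qed.

Lemma zordinal_eq x y : zordinal x -> zeq x y -> zordinal y.
Proof.
  intros [Ht He] E; split.
  - intros z Hz w Hw. apply (zin_eqr _ _ _ E). apply (Ht z); auto.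
    apply (zin_eqr _ _ _ (zeq_sym _ _ E)); auto.
  - intros z Hz. apply He. apply (zin_eqr _ _ _ (zeq_sym _ _ E)); auto.
Qed.

Lemma ord_elem x z : zordinal x -> zin z x -> zordinal z.
Proof.
  intros [Ht He] Hz; split; [apply He; auto|].
  intros w Hw; apply He; apply (Ht z); auto.
Qed.

Lemma tricho : forall x, zordinal x -> forall y, zordinal y ->
  zin x y \/ zeq x y \/ zin y x.
Proof.
  intro x; induction x as [x IHx] using zin_ind; intros Ox y.
  induction y as [y IHy] using zin_ind; intros Oy.
  destruct (classic (exists x', zin x' x /\ (zeq x' y \/ zin y x'))) as
      [[x' [Hx' [E|Hy]]]|N1].
  - right; right; eapply zin_eql; eauto.
  - right; right; apply (proj1 Ox x' Hx'); auto.
  - destruct (classic (exists y', zin y' y /\ (zin x y' \/ zeq x y'))) as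
        [[y' [Hy' [Hx|E]]]|N2].
    + left; apply (proj1 Oy y' Hy'); auto.
    + left; eapply zin_eql; [apply zeq_sym; eauto| auto].
    + right; left; apply zext.
      * intros x' Hx'. destruct (IHx x' Hx' (ord_elem _ _ Ox Hx') y Oy) as [H|[H|H]]; auto;
          exfalso; apply N1; eauto.
      * intros y' Hy'. destruct (IHy y' Hy' (ord_elem _ _ Oy Hy')) as [H|[H|H]]; auto;
          exfalso; apply N2; eauto.
Qed.

Lemma mex_exists (A : Type) (b : A -> zset) :
  (forall i, zordinal (b i)) ->
  exists M, is_mex (fun c => exists i, zeq c (b i)) M.
Proof.
  intros Ob.
  set (L := fun c => exists i, zeq c (b i)).
  set (Q := fun i => forall z, zordinal z -> zsub z (b i) -> L z).
  set (M := zsup {i : A | Q i} (fun s => b (proj1_sig s))).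
  assert (inM : forall i, Q i -> zin (b i) M).
  { intros i Hi. exists (exist _ i Hi). apply zeq_refl. }
  assert (Mel : forall z, zin z M -> exists i, Q i /\ zeq z (b i)).
  { intros z [[i Hi] E]; exists i; auto. }
  assert (OM : zordinal M).
  { split.
    - intros z Hz w Hw. destruct (Mel z Hz) as [i [Qi E]].
      assert (wb : zin w (b i)) by (eapply zin_eqr; eauto).
      assert (Ow : zordinal w) by (eapply ord_elem; eauto).
      assert (wsub : zsub w (b i)) by (apply (proj1 (Ob i)); auto).
      destruct (Qi w Ow wsub) as [j Ej].
      assert (Qj : Q j).
      { intros z' Oz' Hs. apply Qi; auto. intros u Hu. apply wsub.
        apply (zeq_sub _ _ (zeq_sym _ _ Ej)). apply Hs; auto. }
      eapply zin_eql; [apply zeq_sym; eauto| apply inM; auto].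
    - intros z Hz. destruct (Mel z Hz) as [i [_ E]].
      apply (zordinal_eq (b i)); [auto| apply zeq_sym; auto]. }
  exists M; split; [exact OM|split].
  - intros [k Ek].
    assert (Qk : Q k).
    { intros z Oz Hs.
      assert (zM : zsub z M) by (intros u Hu; apply (zeq_sub _ _ (zeq_sym _ _ Ek)); auto).
      destruct (tricho z Oz M OM) as [H|[H|H]].
      - destruct (Mel z H) as [i [_ E]]; exists i; auto.
      - exists k; eapply zeq_trans; eauto.
      - exfalso; apply (zin_irrefl M); auto. }
    apply (zin_irrefl M). eapply zin_eql; [apply zeq_sym; exact Ek| apply inM; auto].
  - intros c Oc Nc z Hz. destruct (Mel z Hz) as [i [Qi E]].
    apply (zin_eql (b i)); [apply zeq_sym; auto|].
    destruct (tricho (b i) (Ob i) c Oc) as [H|[H|H]]; auto.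
    + exfalso; apply Nc; exists i; apply zeq_sym; auto.
    + exfalso; apply Nc. apply Qi; auto. apply (proj1 (Ob i)); auto.
Qed.

Lemma gr_ord g a : grundy g a -> zordinal a.
Proof. destruct g; simpl; intros [H _]; auto. Qed.

Lemma gr_notin g a x : grundy g a -> is_option g x -> ~ grundy x a.
Proof.
  destruct g as [A f]; simpl; intros [_ [N _]] [i Hi] Hx; subst; apply N; eauto.
Qed.

Lemma gr_min g a b : grundy g a -> zordinal b ->
  (forall x, is_option g x -> ~ grundy x b) -> zsub a b.
Proof.
  destruct g as [A f]; simpl; intros [_ [_ Hm]] Ob H; apply Hm; auto.
  intros [i Hi]; apply (H (f i)); eauto.
Qed.

Lemma gr_eq : forall g a b, grundy g a -> zeq a b -> grundy g b.
Proof.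
  induction g as [A f IH]; simpl; intros a b [Ho [Hn Hm]] E; split;
    [eapply zordinal_eq; eauto| split].
  - intros [i Hi]; apply Hn; exists i; eapply IH; [exact Hi| apply zeq_sym; auto].
  - intros c Oc Nc z Hz; apply (Hm c Oc Nc); eapply zin_eqr; [apply zeq_sym; eauto| auto].
Qed.

Lemma gr_uniq g a b : grundy g a -> grundy g b -> zeq a b.
Proof.
  intros Ha Hb; apply zext.
  - apply (gr_min g); [auto| eapply gr_ord; eauto|]. intros x Hx; eapply gr_notin; eauto.
  - apply (gr_min g); [auto| eapply gr_ord; eauto|]. intros x Hx; eapply gr_notin; eauto.
Qed.

Lemma gr_exists : forall g, exists a, grundy g a.
Proof.
  induction g as [A f IH].
  set (b := fun i => proj1_sig (constructive_indefinite_description _ (IH i))).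
  assert (Hb : forall i, grundy (f i) (b i)).
  { intro i; unfold b; destruct constructive_indefinite_description; auto. }
  destruct (mex_exists A b (fun i => gr_ord _ _ (Hb i))) as [M [O [N Mi]]].
  exists M; simpl; split; [auto| split].
  - intros [i Hi]; apply N; exists i; eapply gr_uniq; eauto.
  - intros c Oc Nc; apply Mi; auto. intros [i Hi]; apply Nc; exists i.
    eapply gr_eq; [apply Hb| apply zeq_sym; auto].
Qed.

Lemma mex_below g h g' c a' : grundy g c -> grundy h c -> is_option g g' ->
  grundy g' a' -> ~ (exists h', is_option h h' /\ grundy h' a') ->
  exists g'', is_option g' g'' /\ grundy g'' c.
Proof.
  intros Hg Hh Ho Hg' Nh. apply NNPP; intro N.
  assert (s1 : zsub a' c).
  { apply (gr_min g'); auto; [eapply gr_ord; eauto|]. intros x Hx Hxc; apply N; eauto. }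
  assert (s2 : zsub c a').
  { apply (gr_min h); auto; [eapply gr_ord; eauto|]. intros x Hx Hxc; apply Nh; eauto. }
  apply (gr_notin g c g'); auto. eapply gr_eq; [exact Hg'| apply zext; auto].
Qed.

Definition dead g := forall x, ~ is_option g x.
Lemma dead_zero : dead zero.
Proof. intros x [e _]; destruct e. Qed.
Lemma equiv1_dead g h : dead g -> dead h -> equiv1 g h.
Proof.
  intros Dg Dh a; split; intros [x [Hx _]]; [destruct (Dg x Hx)| destruct (Dh x Hx)].
Qed.

Section Fam.
Variable S : Type.
Variable le : S -> S -> Prop.

Definition Rel (F F' : S -> game) : Prop := forall i,
  equiv1 (F i) (F' i) \/
  ((exists c, grundy (F i) c /\ grundy (F' i) c) /\
   forall j, slt le i j -> dead (F j) /\ dead (F' j)).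

Lemma Rel_sym F F' : Rel F F' -> Rel F' F.
Proof.
  intros R i; destruct (R i) as [E|[[c [H1 H2]] D]].
  - left; intro a; split; apply E.
  - right; split; [eauto|]. intros j Hj; destruct (D j Hj); auto.
Qed.

Definition mv (F : S -> game) i0 g : S -> game := fun i =>
  if excluded_middle_informative (i = i0) then g
  else if excluded_middle_informative (slt le i0 i) then zero else F i.

Lemma mv_moved F i0 g : moved le F i0 g (mv F i0 g).
Proof.
  unfold mv; split; [|split].
  - destruct excluded_middle_informative; congruence.
  - intros i Hs; destruct Hs as [Hl Hne] eqn:Hs0; clear Hs0. destruct excluded_middle_informative; [congruence|].
    destruct excluded_middle_informative as [|Hn]; auto. exfalso; apply Hn; split; auto.
  - intros i Hne Hs. destruct excluded_middle_informative; [congruence|].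
    destruct excluded_middle_informative; [contradiction| auto].
Qed.

Lemma moved_comp F i0 g1 G1 g2 G2 :
  moved le F i0 g1 G1 -> moved le G1 i0 g2 G2 -> moved le F i0 g2 G2.
Proof.
  intros [a1 [b1 c1]] [a2 [b2 c2]]; split; [auto| split; auto].
  intros i Hne Hs; rewrite c2; auto.
Qed.

Lemma R_move F F' i0 g' h' G' H' a : Rel F F' -> is_option (F i0) g' ->
  moved le F i0 g' G' -> moved le F' i0 h' H' -> grundy g' a -> grundy h' a ->
  Rel G' H'.
Proof.
  intros R Ho [a1 [b1 c1]] [a2 [b2 c2]] Ga Ha i.
  destruct (classic (i = i0)) as [->|Hne].
  - right; split; [exists a; rewrite a1, a2; auto|].
    intros j Hj; rewrite b1, b2; auto; split; apply dead_zero.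
  - destruct (classic (slt le i0 i)) as [Hs|Hs].
    + left; rewrite b1, b2; auto; intro; tauto.
    + rewrite c1, c2; auto. destruct (R i) as [E|[C D]]; [left; auto|right; split; auto].
      intros j Hj. destruct (classic (j = i0)) as [->|Hj0].
      * exfalso; apply (proj1 (D i0 Hj) g' Ho).
      * destruct (classic (slt le i0 j)) as [Hs'|Hs'].
        -- rewrite b1, b2; auto; split; apply dead_zero.
        -- rewrite c1, c2; auto.
Qed.

Lemma R_move1 F F' i0 g G c : Rel F F' -> ~ dead (F i0) -> moved le F i0 g G ->
  (forall j, slt le i0 j -> dead (F' j)) -> grundy g c -> grundy (F' i0) c ->
  Rel G F'.
Proof.
  intros R ND [a1 [b1 c1]] DA Gc Fc i.
  destruct (classic (i = i0)) as [->|Hne].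
  - right; split; [exists c; rewrite a1; auto|].
    intros j Hj; rewrite b1; auto; split; [apply dead_zero| auto].
  - destruct (classic (slt le i0 i)) as [Hs|Hs].
    + left; rewrite b1; auto; apply equiv1_dead; [apply dead_zero| auto].
    + rewrite c1; auto. destruct (R i) as [E|[C D]]; [left; auto|right; split; auto].
      intros j Hj. destruct (classic (j = i0)) as [->|Hj0].
      * exfalso; apply ND; apply (D i0 Hj).
      * destruct (classic (slt le i0 j)) as [Hs'|Hs'].
        -- rewrite b1; auto; split; [apply dead_zero| apply DA; auto].
        -- rewrite c1; auto.
Qed.

Lemma oj_inv F J : ordered_join le F J ->
  (forall X, is_option J X ->
       exists i0 g' F', is_option (F i0) g' /\ moved le F i0 g' F' /\
                        ordered_join le F' X) /\
  (forall i0 g' F', is_option (F i0) g' -> moved le F i0 g' F' ->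
       exists X, is_option J X /\ ordered_join le F' X).
Proof. intros H; destruct H; auto. Qed.

Inductive below : game -> game -> Prop :=
| b1 : forall X Y, is_option X Y -> below Y X
| b2 : forall X Y Z, is_option X Z -> below Y Z -> below Y X.

Lemma below_wf : forall X, Acc below X.
Proof.
  induction X as [A f IH]; constructor; intros Y HY.
  inversion HY as [X0 Y0 Ho|X0 Y0 Z Ho Hb]; subst.
  - destruct Ho as [a <-]; auto.
  - destruct Ho as [a <-]; apply (Acc_inv (IH a)); auto.
Qed.

Definition prel (p q : game * game) : Prop :=
  (below (fst p) (fst q) /\ (below (snd p) (snd q) \/ snd p = snd q)) \/
  (fst p = fst q /\ below (snd p) (snd q)).

Lemma prel_wf : forall X Y, Acc prel (X, Y).
Proof.
  intro X; induction (below_wf X) as [X _ IHX]; intro Y.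
  induction (below_wf Y) as [Y _ IHY].
  constructor; intros [X' Y'] [[HX _]|[HX HY]]; simpl in *; auto.
  subst; auto.
Qed.

Definition IHtype X Y := forall X1 Y1 G1 H1 x1 y1,
  ((below X1 X /\ (below Y1 Y \/ Y1 = Y)) \/ (X1 = X /\ below Y1 Y)) ->
  ordered_join le G1 X1 -> ordered_join le H1 Y1 -> Rel G1 H1 ->
  grundy X1 x1 -> grundy Y1 y1 -> zeq x1 y1.

Lemma half X Y F F' y : IHtype X Y -> ordered_join le F X -> ordered_join le F' Y ->
  Rel F F' -> grundy Y y -> forall X', is_option X X' -> ~ grundy X' y.
Proof.
  intros IH OX OY R Gy X' HX' GX'.
  destruct (oj_inv _ _ OX) as [OX1 _].
  destruct (oj_inv _ _ OY) as [_ OY2].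
  destruct (OX1 X' HX') as [i0 [g' [G' [Hg' [Mg OG']]]]].
  destruct (gr_exists g') as [a' Ga'].
  assert (matched : forall h', is_option (F' i0) h' -> grundy h' a' -> False).
  { intros h' Hh' Ha'.
    destruct (OY2 i0 h' (mv F' i0 h') Hh' (mv_moved _ _ _)) as [Y' [HY' OY']].
    assert (RG : Rel G' (mv F' i0 h')) by (eapply R_move; eauto; apply mv_moved).
    destruct (gr_exists Y') as [y' Gy'].
    assert (E : zeq y y').
    { eapply (IH X' Y'); eauto. left; split; [apply b1; auto| left; apply b1; auto]. }
    apply (gr_notin Y y Y'); auto. eapply gr_eq; [exact Gy'| apply zeq_sym; auto]. }
  destruct (R i0) as [E|[[c [Fc F'c]] D]].
  - destruct (proj1 (E a') (ex_intro _ g' (conj Hg' Ga'))) as [h' [Hh' Ha']].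
    eapply matched; eauto.
  - destruct (classic (exists h', is_option (F' i0) h' /\ grundy h' a')) as [[h' [? ?]]|Nh].
    + eapply matched; eauto.
    + destruct (mex_below _ _ _ _ _ Fc F'c Hg' Ga' Nh) as [g'' [Hg'' Gc]].
      destruct (oj_inv _ _ OG') as [_ OG2].
      destruct (OG2 i0 g'' (mv G' i0 g'')) as [X'' [HX'' OX'']].
      { destruct Mg as [-> _]; auto. }
      { apply mv_moved. }
      assert (RG : Rel (mv G' i0 g'') F').
      { eapply R_move1; eauto.
        - intro Dd; apply (Dd g' Hg').
        - eapply moved_comp; [exact Mg| apply mv_moved].
        - intros j Hj; apply (D j Hj). }
      destruct (gr_exists X'') as [x'' Gx''].
      assert (E : zeq x'' y).
      { eapply (IH X'' Y); eauto. left; split; [eapply b2; eauto; apply b1; auto| right; auto]. }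
      apply (gr_notin X' y X''); auto. eapply gr_eq; eauto.
Qed.

Lemma main_lemma : forall p F F' x y, ordered_join le F (fst p) ->
  ordered_join le F' (snd p) -> Rel F F' -> grundy (fst p) x -> grundy (snd p) y ->
  zeq x y.
Proof.
  intros [X0 Y0]; induction (prel_wf X0 Y0) as [[X Y] _ IH]; simpl.
  intros F F' x y OX OY R Gx Gy.
  assert (IH1 : IHtype X Y).
  { intros X1 Y1 G1 H1 x1 y1 Hp O1 O2 R1 g1 g2.
    apply (IH (X1, Y1)) with (F := G1) (F' := H1); auto. }
  assert (IH2 : IHtype Y X).
  { intros Y1 X1 H1 G1 y1 x1 Hp O1 O2 R1 g1 g2. apply zeq_sym.
    apply (IH (X1, Y1)) with (F := G1) (F' := H1); simpl; auto; [|apply Rel_sym; auto].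
    unfold prel; simpl.
    destruct Hp as [[Hb [Hb2| E2]]|[E2 Hb]]; subst; auto. }
  apply zext.
  - apply (gr_min X); [auto| eapply gr_ord; eauto|]. eapply half; eauto.
  - apply (gr_min Y); [auto| eapply gr_ord; eauto|].
    eapply (half Y X F' F); eauto. apply Rel_sym; auto.
Qed.

Lemma top G H JG JH a : ordered_join le G JG -> ordered_join le H JH ->
  (forall i, equiv1 (G i) (H i)) -> grundy_set JG a -> grundy_set JH a.
Proof.
  intros OG OH h1 [X [HX GX]].
  destruct (oj_inv _ _ OG) as [OG1 _].
  destruct (oj_inv _ _ OH) as [_ OH2].
  destruct (OG1 X HX) as [i0 [g' [G' [Hg' [Mg OG']]]]].
  destruct (gr_exists g') as [a' Ga'].
  destruct (proj1 (h1 i0 a') (ex_intro _ g' (conj Hg' Ga'))) as [h' [Hh' Ha']].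
  destruct (OH2 i0 h' (mv H i0 h') Hh' (mv_moved _ _ _)) as [Y [HY OY]].
  assert (RG : Rel G' (mv H i0 h')).
  { apply (R_move G H i0 g' h' G' (mv H i0 h') a'); auto; [intro i; left; auto| apply mv_moved]. }
  destruct (gr_exists Y) as [y Gy].
  exists Y; split; auto. eapply gr_eq; [exact Gy|].
  apply zeq_sym. apply (main_lemma (X, Y) G' (mv H i0 h')); auto.
Qed.

End Fam.

Theorem mainTheorem5 (S : Type) (le : S -> S -> Prop) (HS : is_poset S le)
    (G H : S -> game) (JG JH : game)
    (hG : ordered_join le G JG) (hH : ordered_join le H JH)
    (h1 : forall i, equiv1 (G i) (H i)) :
  equiv1 JG JH.
Proof.
  intro a; split.
  - apply (top S le G H JG JH a); auto.
  - apply (top S le H G JH JG a); auto. intros i b; split; apply h1.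
Qed.
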